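(* Let $X$ be a Polish space and let $c:X\times X\to[0,\infty)$ be a continuous bounded function with $c(x,y)=c(y,x)$ for all $x,y\in X$. For $Q\in\mathcal M(X)$ define $K(Q):=\int_{X\times X}c(x,y)\,dQ(x)\,dQ(y)$. Then: (i) $c$ is positive definite if and only if $K$ is convex on $\mathcal M(X)$; (ii) $c$ is balanced positive definite if and only if $K$ is convex on $\mathcal P(X)$.
   Context: $\mathcal M(X)$ denotes the set of finite (nonnegative) Borel measures on $X$ and $\mathcal P(X)$ the set of Borel probability measures on $X$. A symmetric function $c:X\times X\to[0,\infty)$ is positive definite if for all $n$, all distinct points $x_1,\ldots,x_n\in X$ and all real numbers $a_1,\ldots,a_n$ one has $\sum_{i,j=1}^n c(x_i,x_j)a_ia_j\ge 0$. It is balanced positive definite if for all $n$, all distinct $x_1,\ldots,x_n\in X$ and all real $a_1,\ldots,a_n$ with $\sum_{i=1}^n a_i=0$ one has $\sum_{i,j=1}^n c(x_i,x_j)a_ia_j\ge0$. *)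

(* Defs.v *)
From HB Require Import structures.
From mathcomp Require Import all_boot all_order all_algebra.
From mathcomp Require Import all_classical all_reals all_analysis.
Set Implicit Arguments. Unset Strict Implicit. Unset Printing Implicit Defensive.
Import Order.TTheory GRing.Theory Num.Theory.
Import numFieldNormedType.Exports.
Local Open Scope classical_set_scope.
Local Open Scope ring_scope.

Definition separable_space (X : topologicalType) : Prop :=
  exists D : set X, countable D /\ dense D.

Definition is_metric (R : realType) (X : Type) (d : X -> X -> R) : Prop :=
  [/\ forall x y, 0 <= d x y,
      forall x y, d x y = 0 <-> x = y,
      forall x y, d x y = d y x &
      forall x y z, d x z <= d x y + d y z].

Definition d_cauchy (R : realType) (X : Type) (d : X -> X -> R)
  (u : nat -> X) : Prop :=
  forall e : R, 0 < e -> exists N : nat,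
    forall m n : nat, (N <= m)%N -> (N <= n)%N -> d (u m) (u n) < e.

Definition completely_metrizable (R : realType) (X : topologicalType) : Prop :=
  exists d : X -> X -> R,
    [/\ is_metric d,
        (forall A : set X, open A <->
           (forall x, A x -> exists2 e : R, 0 < e & [set y | d x y < e] `<=` A)) &
        (forall u : nat -> X, d_cauchy d u -> exists l : X, u @ \oo --> l)].

Definition polish_space (R : realType) (X : topologicalType) : Prop :=
  separable_space X /\ completely_metrizable R X.

Notation borel X := (g_sigma_algebraType (@open X)).

Definition positive_definite (R : realType) (X : Type) (c : X -> X -> R) : Prop :=
  forall (n : nat) (x : 'I_n -> X), injective x ->
  forall a : 'I_n -> R,
    0 <= \sum_(i < n) \sum_(j < n) c (x i) (x j) * a i * a j.

Definition balanced_positive_definite (R : realType) (X : Type)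
  (c : X -> X -> R) : Prop :=
  forall (n : nat) (x : 'I_n -> X), injective x ->
  forall a : 'I_n -> R, \sum_(i < n) a i = 0 ->
    0 <= \sum_(i < n) \sum_(j < n) c (x i) (x j) * a i * a j.

Definition Kfun (R : realType) (X : ptopologicalType) (c : X -> X -> R)
  (Q : {measure set (borel X) -> \bar R}) : \bar R :=
  (\int[Q]_x \int[Q]_y (c x y)%:E)%E.

Definition K_convex_on_finite_measures (R : realType) (X : ptopologicalType)
  (c : X -> X -> R) : Prop :=
  forall (Q1 Q2 Q : {finite_measure set (borel X) -> \bar R}) (t : R),
    0 <= t <= 1 ->
    (forall A : set (borel X), measurable A ->
       Q A = (t%:E * Q1 A + (1 - t)%:E * Q2 A)%E) ->
    (Kfun c Q <= t%:E * Kfun c Q1 + (1 - t)%:E * Kfun c Q2)%E.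

Definition K_convex_on_probabilities (R : realType) (X : ptopologicalType)
  (c : X -> X -> R) : Prop :=
  forall (Q1 Q2 Q : probability (borel X) R) (t : R),
    0 <= t <= 1 ->
    (forall A : set (borel X), measurable A ->
       Q A = (t%:E * Q1 A + (1 - t)%:E * Q2 A)%E) ->
    (Kfun c Q <= t%:E * Kfun c Q1 + (1 - t)%:E * Kfun c Q2)%E.

(* Main.v *)
Require Import Defs.
From HB Require Import structures.
From mathcomp Require Import all_boot all_order all_algebra.
From mathcomp Require Import all_classical all_reals all_analysis.
Set Implicit Arguments. Unset Strict Implicit. Unset Printing Implicit Defensive.
Import Order.TTheory GRing.Theory Num.Theory.
Import numFieldNormedType.Exports.
Local Open Scope classical_set_scope.
Local Open Scope ring_scope.
From mathcomp Require Import lebesgue_measure measurable_realfun.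
From mathcomp Require Import lra ring.
Section merge.
Context (R : realType).

Lemma quad_expand n (C : 'I_n -> 'I_n -> R) (u v : 'I_n -> R) :
  \sum_i \sum_j C i j * (u i - v i) * (u j - v j) =
  \sum_i \sum_j C i j * u i * u j + \sum_i \sum_j C i j * v i * v j
  - \sum_i \sum_j C i j * u i * v j - \sum_i \sum_j C i j * v i * u j.
Proof.
rewrite -big_split /= -!sumrB; apply: eq_bigr => i _.
rewrite -big_split /= -!sumrB; apply: eq_bigr => j _.
ring.
Qed.

Lemma regroup n k (p : 'I_n -> 'I_k) (G : 'I_k -> 'I_k -> R) (a : 'I_n -> R) :
  \sum_i \sum_j G (p i) (p j) * a i * a j =
  \sum_u \sum_v G u v * (\sum_(i | p i == u) a i) * (\sum_(j | p j == v) a j).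
Proof.
transitivity (\sum_i \sum_v \sum_(j | p j == v) G (p i) v * a i * a j).
  apply: eq_bigr => i _; rewrite (partition_big p xpredT) //=.
  by apply: eq_bigr => v _; apply: eq_bigr => j /eqP ->.
rewrite (partition_big p xpredT) //=; apply: eq_bigr => u _.
transitivity (\sum_(i | p i == u) \sum_v \sum_(j | p j == v) G u v * a i * a j).
  by apply: eq_bigr => i /eqP ->.
rewrite exchange_big /=; apply: eq_bigr => v _.
rewrite -mulrA big_distrl /= big_distrr /=; apply: eq_bigr => i _.
rewrite big_distrr /= big_distrr /=; apply: eq_bigr => j _; ring.
Qed.

Lemma pd_gen (T : choiceType) (c : T -> T -> R) (bal : bool) :
  (forall n (x : 'I_n -> T), injective x -> forall a : 'I_n -> R,
     (bal -> \sum_i a i = 0) -> 0 <= \sum_i \sum_j c (x i) (x j) * a i * a j) ->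
  forall n (x : 'I_n -> T) (a : 'I_n -> R),
     (bal -> \sum_i a i = 0) -> 0 <= \sum_i \sum_j c (x i) (x j) * a i * a j.
Proof.
move=> H [|n] x a ha; first by rewrite big_ord0.
pose s := undup [seq x i | i <- enum 'I_n.+1].
have xs i : x i \in s by rewrite mem_undup; apply: map_f; rewrite mem_enum.
have xs' i : (index (x i) s < size s)%N by rewrite index_mem.
pose p i : 'I_(size s) := Ordinal (xs' i).
pose y (u : 'I_(size s)) := nth (x ord0) s u.
have hy i : y (p i) = x i by rewrite /y /= nth_index.
have yinj : injective y.
  move=> u v /eqP; rewrite /y nth_uniq ?undup_uniq //; by move/eqP/val_inj.
pose A u := \sum_(i | p i == u) a i.
have -> : \sum_i \sum_j c (x i) (x j) * a i * a j =
          \sum_u \sum_v c (y u) (y v) * A u * A v.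
  rewrite -(regroup p (fun u v => c (y u) (y v))); apply: eq_bigr => i _.
  by apply: eq_bigr => j _; rewrite !hy.
apply: H => // hb; have h := ha hb.
by rewrite (partition_big p xpredT) // in h.
Qed.

End merge.
Section dm.
Context d (T : measurableType d) (R : realType) (n : nat) (x : 'I_n -> T) (w : 'I_n -> R).
Local Open Scope ereal_scope.
Definition dm (A : set T) : \bar R := \sum_(i < n) ((`|w i|)%:E * \d_(x i) A).

Let dm0 : dm set0 = 0.
Proof. by rewrite /dm big1 // => i _; rewrite dirac0 mule0. Qed.

Let dm_ge0 B : 0 <= dm B.
Proof. by rewrite /dm; apply: sume_ge0 => i _; rewrite mule_ge0. Qed.

Let dm_sa : semi_sigma_additive dm.
Proof.
move=> F mF tF mUF; rewrite [X in _ --> X](_ : _ =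
    lim ((fun n => \sum_(0 <= i < n) dm (F i)) @ \oo)).
  by apply: is_cvg_ereal_nneg_natsum => k _; exact: dm_ge0.
rewrite nneseries_sum//; last by move=> i j _; rewrite mule_ge0.
rewrite {1}/dm; apply: eq_bigr => /= i _.
exact: (measure_semi_bigcup (mscale (NngNum (normr_ge0 (w i))) \d_(x i))).
Qed.

HB.instance Definition _ := isMeasure.Build _ _ _ dm dm0 dm_ge0 dm_sa.

Let dm_fin : fin_num_fun dm.
Proof.
move=> A mA; rewrite /dm.
rewrite (eq_bigr (fun i => ((`|w i| * (x i \in A)%:R)%:E))); last first.
  by move=> i _; rewrite diracE.
by rewrite sumEFin.
Qed.

HB.instance Definition _ := Measure_isFinite.Build _ _ _ dm dm_fin.

Lemma dm_integral (f : T -> \bar R) : measurable_fun [set: T] f -> (forall t, 0 <= f t) ->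
  \int[dm]_t f t = \sum_(i < n) (`|w i|)%:E * f (x i).
Proof.
move=> mf f0.
rewrite (eq_measure_integral (msum (fun k => if insub k is Some i then mscale (NngNum (normr_ge0 (w i))) \d_(x i) else mzero) n)); last first.
  move=> A mA _; rewrite /msum /= /dm; apply: eq_bigr => i _.
  by rewrite valK.
rewrite ge0_integral_measure_sum//; apply: eq_bigr => i _.
rewrite valK ge0_integral_mscale//= integral_dirac// diracT mul1e //.
Qed.

End dm.

Section dm_lemmas.
Context d (T : measurableType d) (R : realType) (n : nat) (x : 'I_n -> T).
Local Open Scope ereal_scope.

Lemma dmE (w : 'I_n -> R) A : dm x w A = (\sum_(i < n) `|w i| * (x i \in A)%:R)%R%:E.
Proof. by rewrite /dm -sumEFin; apply: eq_bigr => i _; rewrite diracE -EFinM. Qed.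

Lemma dm_mix (w1 w2 : 'I_n -> R) (t : R) :
  (forall i, 0 <= w1 i)%R -> (forall i, 0 <= w2 i)%R -> (0 <= t <= 1)%R ->
  forall A, dm x (fun i => t * w1 i + (1 - t) * w2 i)%R A =
            t%:E * dm x w1 A + (1 - t)%:E * dm x w2 A.
Proof.
move=> h1 h2 /andP[t0 t1] A; rewrite !dmE -!EFinM -EFinD; congr EFin.
rewrite !big_distrr -big_split /=; apply: eq_bigr => i _.
have t1' : (0 <= 1 - t)%R by rewrite subr_ge0.
rewrite !ger0_norm ?addr_ge0 ?mulr_ge0 //; ring.
Qed.

Lemma dm_setT (w : 'I_n -> R) : dm x w setT = (\sum_(i < n) `|w i|)%R%:E.
Proof. by rewrite dmE; congr EFin; apply: eq_bigr => i _; rewrite in_setT mulr1. Qed.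

Definition mkprob (w : 'I_n -> R) (H : dm x w setT = 1) : probability T R :=
  HB.pack (dm x w) (Measure_isProbability.Build _ _ _ (dm x w) H).

End dm_lemmas.
Section mix.
Context d (T : measurableType d) (R : realType).
Local Open Scope ereal_scope.
Lemma mix_integral (Q1 Q2 Q : {measure set T -> \bar R}) (t : R) :
  (0 <= t <= 1)%R -> (forall A, measurable A -> Q A = t%:E * Q1 A + (1 - t)%:E * Q2 A) ->
  forall f : T -> \bar R, measurable_fun [set: T] f -> (forall x, 0 <= f x) ->
  \int[Q]_x f x = t%:E * \int[Q1]_x f x + (1 - t)%:E * \int[Q2]_x f x.
Proof.
move=> /andP[t0 t1] HQ f mf f0.
have t1' : (0 <= 1 - t)%R by rewrite subr_ge0.
pose m_ : {measure set T -> \bar R}^nat := (fun k : nat => if k is 0%N then mscale (NngNum t0) Q1 else mscale (NngNum t1') Q2).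
rewrite (eq_measure_integral (msum m_ 2)); last first.
  move=> A mA _; rewrite HQ //.
  by rewrite /= /msum /= !big_ord_recl big_ord0 adde0.
rewrite ge0_integral_measure_sum// !big_ord_recl big_ord0 adde0 /=.
by rewrite !ge0_integral_mscale.
Qed.

Lemma measurable_cstP (P : Prop) : measurable [set _ : T | P].
Proof.
have [p|np] := pselect P.
  by rewrite (_ : [set _ | P] = setT) //; apply/seteqP; split.
by rewrite (_ : [set _ | P] = set0) //; apply/seteqP; split.
Qed.
End mix.

Section polish.
Context (R : realType) (X : ptopologicalType) (dist : X -> X -> R) (e : nat -> X).
Hypothesis hd : is_metric dist.
Hypothesis hop : forall A : set X, open A <->
  (forall x, A x -> exists2 r : R, 0 < r & [set y | dist x y < r] `<=` A).
Hypothesis hden : forall x (r : R), 0 < r -> exists m, dist x (e m) < r.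

Local Notation T := (borel X).

Lemma open_meas (A : set X) : open A -> measurable (A : set T).
Proof. by move=> oA; apply: sub_sigma_algebra. Qed.

Let dsym x y : dist x y = dist y x.
Proof. by case: hd. Qed.
Let dtri x y z : dist x z <= dist x y + dist y z.
Proof. by case: hd. Qed.

Lemma lt_open a b : open [set x | dist x a < dist x b].
Proof.
apply/hop => x /= hx; exists ((dist x b - dist x a) / 2).
  by rewrite divr_gt0 // subr_gt0.
move=> y /= hy.
have h1 := dtri y x a; have h2 := dtri x y b; rewrite (dsym y x) in h1.
lra.
Qed.

Fixpoint idx (n : nat) (x : X) : nat :=
  if n is n'.+1 then
    (if dist x (e n) < dist x (e (idx n' x)) then n else idx n' x)
  else 0%N.

Lemma idx_le n x : (idx n x <= n)%N.
Proof.
elim: n => //= n ih; case: ifP => // _; exact: leqW.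
Qed.

Lemma idx_min n x m : (m <= n)%N -> dist x (e (idx n x)) <= dist x (e m).
Proof.
elim: n m => [|n ih] m.
  by rewrite leqn0 => /eqP ->.
rewrite leq_eqVlt => /orP[/eqP ->|hm] /=.
  by case: ifPn => [_|]; [exact: lexx | rewrite -leNgt].
case: ifPn => h; last exact: ih.
by apply/ltW/(lt_le_trans h)/ih.
Qed.

Lemma psi_cvg x : (e (idx n x)) @[n --> \oo] --> x.
Proof.
move=> A; rewrite nbhsE => -[B [oB Bx] BA].
have [r r0 rB] := (hop B).1 oB x Bx.
have [m hm] := hden x r0.
exists m => // k /= mk.
by apply: BA; apply: rB => /=; exact: (le_lt_trans (idx_min x mk) hm).
Qed.

Lemma idx_meas n m : measurable ([set x | idx n x = m] : set T).
Proof.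
elim: n m => [|n ih] m.
  exact: (@measurable_cstP _ T (0%N = m)).
pose S := \bigcup_k ([set x | idx n x = k] `&` [set x | dist x (e n.+1) < dist x (e k)]).
have mS : measurable (S : set T).
  apply: bigcupT_measurable => k.
  apply: measurableI; [exact: ih | apply: open_meas; exact: lt_open].
rewrite (_ : [set x | _] = (S `&` [set _ | n.+1 = m]) `|` (~` S `&` [set x | idx n x = m])).
  apply: measurableU; apply: measurableI => //.
    exact: (@measurable_cstP _ T).
  exact: measurableC.
apply/seteqP; split => x /=.
  case: ifPn => h hm.
    by left; split => //; exists (idx n x) => //.
  right; split => //; move=> [k _ [/= hk hk']]; apply: (negP h); rewrite hk; exact: hk'.
case=> -[hS hm].
  case: hS => k _ /= [hk hk']; by rewrite hk hk' hm.
case: ifPn => h //; exfalso; apply: hS; exists (idx n x) => //.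
Qed.

Lemma comp_idx_meas d' (T' : measurableType d') n (h : nat -> T') :
  measurable_fun [set: T] (fun x => h (idx n x)).
Proof.
move=> _ Y mY; rewrite setTI.
rewrite (_ : _ @^-1` _ = \bigcup_k ([set x | idx n x = k] `&` [set _ | Y (h k)])).
  apply: bigcupT_measurable => k.
  apply: measurableI; [exact: idx_meas | exact: (@measurable_cstP _ T)].
apply/seteqP; split => x /=.
  by move=> hx; exists (idx n x).
by case=> k _ [/= -> ].
Qed.

Local Open Scope ereal_scope.

Lemma int_idx (P : {measure set T -> \bar R}) n (h : nat -> \bar R) :
  (forall m, 0 <= h m) ->
  \int[P]_x h (idx n x) = \sum_(m < n.+1) h m * P [set x | idx n x = m].
Proof.
move=> h0.
transitivity (\int[P]_x (\sum_(m < n.+1) h m * (\1_[set x | idx n x = m] x)%:E)).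
  apply: eq_integral => x _.
  rewrite (bigD1 (Ordinal (idx_le n x : (idx n x < n.+1)%N)))//= indicE mem_set//.
  rewrite mule1 big1 ?adde0 // => i /negbTE hi; rewrite indicE memNset ?mule0 //=.
  by move=> h'; move: hi; rewrite -val_eqE /= h' eqxx.
rewrite ge0_integral_sum //.
- apply: eq_bigr => m _; rewrite ge0_integralZl// ?integral_indic// ?setIT//;
    try (by move=> x _; rewrite lee_fin); try exact: idx_meas.
  by apply/measurable_EFinP; apply: measurable_indic; exact: idx_meas.
- move=> m; apply: measurable_funeM.
  by apply/measurable_EFinP; apply: measurable_indic; exact: idx_meas.
- by move=> m x _; rewrite mule_ge0// lee_fin.
Qed.

End polish.
Section kernel.
Context (R : realType) (X : ptopologicalType) (dist : X -> X -> R) (e : nat -> X).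
Hypothesis hd : is_metric dist.
Hypothesis hop : forall A : set X, open A <->
  (forall x, A x -> exists2 r : R, 0 < r & [set y | dist x y < r] `<=` A).
Hypothesis hden : forall x (r : R), 0 < r -> exists m, dist x (e m) < r.
Context (c : X -> X -> R) (M : R).
Hypothesis hc : continuous (fun p : X * X => c p.1 p.2).
Hypothesis hM : forall x y, c x y <= M.
Hypothesis c0 : forall x y, 0 <= c x y.

Local Notation T := (borel X).
Local Notation idx := (idx dist e).
Let psi n x := e (idx n x).

Let M0 : 0 <= M.
Proof. by apply: le_trans (hM point point); exact: c0. Qed.

Lemma c_cvg_R x y : c (psi n x) (psi n y) @[n --> \oo] --> c x y.
Proof.
have hx := psi_cvg hop hden (x:=x).
have hy := psi_cvg hop hden (x:=y).
have hp : (psi n x, psi n y) @[n --> \oo] --> (x, y) by apply: cvg_pair.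
have hc1 := @hc (x, y).
exact: (cvg_comp _ _ hp hc1).
Qed.

Local Open Scope ereal_scope.

Lemma c_cvg x y : (c (psi n x) (psi n y))%:E @[n --> \oo] --> (c x y)%:E.
Proof.
apply: cvg_EFin; first exact: nearW.
exact: c_cvg_R.
Qed.

Lemma meas_c x : measurable_fun [set: T] (fun y => (c x y)%:E).
Proof.
apply: (@emeasurable_fun_cvg _ T R setT (fun n (y : T) => (c (psi n x) (psi n y))%:E)).
  move=> n; exact: (comp_idx_meas e hd hop n (fun m => (c (psi n x) (e m))%:E)).
move=> y _; exact: c_cvg.
Qed.

Lemma int_c_le (P : {finite_measure set T -> \bar R}) x :
  \int[P]_y (c x y)%:E <= M%:E * P setT.
Proof.
rewrite -integral_cst //; apply: ge0_le_integral => //.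
- by move=> y _; rewrite lee_fin.
- exact: meas_c.
- by move=> y _; rewrite lee_fin.
Qed.

Lemma int_c_cvg (P : {finite_measure set T -> \bar R}) x :
  \int[P]_y (c (psi n x) (psi n y))%:E @[n --> \oo] --> \int[P]_y (c x y)%:E.
Proof.
apply: (@dominated_cvg _ _ _ P setT _ (fun n y => (c (psi n x) (psi n y))%:E)
   _ (cst M%:E)) => //.
- move=> n; exact: (comp_idx_meas e hd hop n (fun m => (c (psi n x) (e m))%:E)).
- move=> y _; exact: c_cvg.
- exact: finite_measure_integrable_cst.
- by move=> n y _; rewrite gee0_abs ?lee_fin.
Qed.

Lemma meas_F (P : {finite_measure set T -> \bar R}) :
  measurable_fun [set: T] (fun x => \int[P]_y (c x y)%:E).
Proof.
apply: (@emeasurable_fun_cvg _ T R setT (fun n (x : T) => \int[P]_y (c (psi n x) (psi n y))%:E)).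
  move=> n; exact: (comp_idx_meas e hd hop n (fun m => \int[P]_y (c (e m) (psi n y))%:E)).
move=> x _; exact: int_c_cvg.
Qed.

Lemma int_le_M (P : {finite_measure set T -> \bar R}) (f : T -> \bar R) :
  measurable_fun [set: T] f -> (forall y, 0 <= f y) -> (forall y, f y <= M%:E) ->
  \int[P]_y f y <= M%:E * P setT.
Proof.
move=> mf f0 fM; rewrite -integral_cst //; apply: ge0_le_integral => //.
Qed.

Lemma PT_fin (P : {finite_measure set T -> \bar R}) : P setT \is a fin_num.
Proof. exact: fin_num_measure. Qed.

Lemma Bfin (P P' : {finite_measure set T -> \bar R}) :
  \int[P]_x \int[P']_y (c x y)%:E \is a fin_num.
Proof.
rewrite ge0_fin_numE; last by apply: integral_ge0 => x _; apply: integral_ge0 => y _; rewrite lee_fin.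
apply: (@le_lt_trans _ _ ((M%:E * P' setT) * P setT)).
  rewrite -integral_cst //; apply: ge0_le_integral => //.
  - by move=> x _; apply: integral_ge0 => y _; rewrite lee_fin.
  - exact: meas_F.
  - by move=> x _; exact: int_c_le.
have hf : (M%:E * P' setT * P setT) \is a fin_num by rewrite !fin_numM// PT_fin.
by move/fin_numPlt : hf => /andP[].
Qed.

Lemma Bn_cvg (P P' : {finite_measure set T -> \bar R}) :
  \int[P]_x \int[P']_y (c (psi n x) (psi n y))%:E @[n --> \oo] -->
  \int[P]_x \int[P']_y (c x y)%:E.
Proof.
apply: (@dominated_cvg _ _ _ P setT _ (fun n x => \int[P']_y (c (psi n x) (psi n y))%:E)
   _ (cst (M * fine (P' setT))%:E)) => //.
- move=> n; exact: (comp_idx_meas e hd hop n (fun m => \int[P']_y (c (e m) (psi n y))%:E)).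
- move=> x _; exact: int_c_cvg.
- exact: finite_measure_integrable_cst.
- move=> n x _; rewrite gee0_abs; last by apply: integral_ge0 => y _; rewrite lee_fin.
  rewrite EFinM fineK ?PT_fin//; apply: int_le_M.
  + exact: (comp_idx_meas e hd hop n (fun m => (c (psi n x) (e m))%:E)).
  + by move=> y; rewrite lee_fin.
  + by move=> y; rewrite lee_fin.
Qed.

Definition pp (P : {finite_measure set T -> \bar R}) n m : R :=
  fine (P [set x | idx n x = m]).

Lemma ppE (P : {finite_measure set T -> \bar R}) n m :
  (P : {measure set T -> \bar R}) [set x | idx n x = m] = (pp P n m)%:E.
Proof. by rewrite fineK // fin_num_measure //; exact: idx_meas. Qed.

Lemma pp_sum (P : {finite_measure set T -> \bar R}) n :
  (\sum_(m < n.+1) pp P n m)%R = fine (P setT).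
Proof.
have := int_idx e hd hop P n (h := fun _ => 1) (fun _ => lee01).
rewrite (_ : \int[P]_x 1 = \int[P]_x (cst 1 x)) // integral_cst // mul1e => ->.
rewrite [in RHS](eq_bigr (fun m : 'I_n.+1 => (pp P n m)%:E)); last by move=> m _; rewrite mul1e; exact: ppE.
by rewrite sumEFin.
Qed.

Lemma Bn_formula (P P' : {finite_measure set T -> \bar R}) n :
  \int[P]_x \int[P']_y (c (psi n x) (psi n y))%:E =
  (\sum_(m < n.+1) \sum_(m' < n.+1) c (e m) (e m') * pp P n m * pp P' n m')%R%:E.
Proof.
rewrite (@int_idx _ _ _ e hd hop P n (fun m => \int[P']_y (c (e m) (psi n y))%:E)); last first.
  by move=> m; apply: integral_ge0 => y _; rewrite lee_fin.
rewrite -sumEFin; apply: eq_bigr => m _.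
rewrite (@int_idx _ _ _ e hd hop P' n (fun m' => (c (e m) (e m'))%:E)); last first.
  by move=> m'; rewrite lee_fin.
rewrite ppE -sumEFin ge0_sume_distrl; last by move=> i _; rewrite mule_ge0 ?lee_fin// measure_ge0.
apply: eq_bigr => m' _; rewrite ppE -!EFinM; congr EFin; ring.
Qed.

Definition bb (P P' : {finite_measure set T -> \bar R}) : R :=
  fine (\int[P]_x \int[P']_y (c x y)%:E).

Lemma bbE (P P' : {finite_measure set T -> \bar R}) :
  \int[P]_x \int[P']_y (c x y)%:E = (bb P P')%:E.
Proof. by rewrite fineK // Bfin. Qed.

Lemma D_ge0 (bal : bool)
  (hpd : forall n (x : 'I_n -> X) (a : 'I_n -> R), (bal -> (\sum_i a i = 0)%R) ->
     (0 <= \sum_i \sum_j c (x i) (x j) * a i * a j)%R)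
  (P1 P2 : {finite_measure set T -> \bar R}) :
  (bal -> fine (P1 setT) = fine (P2 setT)) ->
  (0 <= bb P1 P1 + bb P2 P2 - bb P1 P2 - bb P2 P1)%R.
Proof.
move=> hbal.
pose bn (P P' : {finite_measure set T -> \bar R}) n :=
  fine (\int[P]_x \int[P']_y (c (psi n x) (psi n y))%:E).
have hb P P' : bn P P' n @[n --> \oo] --> bb P P'.
  apply: fine_cvg; rewrite -bbE; exact: Bn_cvg.
have hD : (bn P1 P1 n + bn P2 P2 n - bn P1 P2 n - bn P2 P1 n)%R @[n --> \oo] -->
    (bb P1 P1 + bb P2 P2 - bb P1 P2 - bb P2 P1)%R.
  by apply: cvgB; [apply: cvgB; [apply: cvgD|]|]; exact: hb.
rewrite -(cvg_lim _ hD) //; apply: limr_ge; first by apply/cvg_ex; eexists; exact: hD.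
apply: nearW => n.
rewrite /bn !Bn_formula /=.
have := hpd n.+1 (fun i => e i) (fun i => pp P1 n i - pp P2 n i)%R.
rewrite (quad_expand (fun i j : 'I_n.+1 => c (e i) (e j)) (fun i => pp P1 n i) (fun i => pp P2 n i)).
apply => hb'; rewrite sumrB !pp_sum hbal //; exact: subrr.
Qed.

Lemma K_mix (Q1 Q2 Q : {finite_measure set T -> \bar R}) (t : R) :
  (0 <= t <= 1)%R ->
  (forall A, measurable A -> Q A = t%:E * Q1 A + (1 - t)%:E * Q2 A) ->
  Kfun c Q = (t ^+ 2 * bb Q1 Q1 + t * (1 - t) * (bb Q1 Q2 + bb Q2 Q1)
              + (1 - t) ^+ 2 * bb Q2 Q2)%R%:E.
Proof.
move=> ht hQ; have /andP[t0 t1] := ht.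
have t0' : 0 <= t%:E by rewrite lee_fin.
have t1' : 0 <= (1 - t)%:E by rewrite lee_fin subr_ge0.
have F0 (P : {finite_measure set T -> \bar R}) x : 0 <= \int[P]_y (c x y)%:E.
  by apply: integral_ge0 => y _; rewrite lee_fin.
rewrite /Kfun.
transitivity (\int[Q]_x (t%:E * \int[Q1]_y (c x y)%:E + (1 - t)%:E * \int[Q2]_y (c x y)%:E)).
  apply: eq_integral => x _; apply: mix_integral => //; first exact: meas_c.
  by move=> y; rewrite lee_fin.
have mG1 (P : {finite_measure set T -> \bar R}) (r : R) :
    measurable_fun [set: T] (fun x => r%:E * \int[P]_y (c x y)%:E).
  by apply: measurable_funeM; exact: meas_F.
rewrite (mix_integral ht hQ); last 2 first.
- by apply: emeasurable_funD; apply: mG1.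
- by move=> x; rewrite adde_ge0 // mule_ge0.
rewrite !ge0_integralD //; try (by move=> x _; rewrite mule_ge0); try exact: mG1.
rewrite !ge0_integralZl //; try exact: meas_F.
rewrite !bbE -!EFinM -!EFinD; congr EFin; ring.
Qed.

Lemma bb_dm n (x : 'I_n -> X) (w w' : 'I_n -> R) (P P' : {finite_measure set T -> \bar R}) :
  (forall A, P A = (@dm _ T R n x w) A) -> (forall A, P' A = (@dm _ T R n x w') A) ->
  bb P P' = (\sum_i \sum_j c (x i) (x j) * `|w i| * `|w' j|)%R.
Proof.
move=> hP hP'; apply: EFin_inj; rewrite -bbE.
rewrite (eq_measure_integral (@dm _ T R n x w)); last by move=> A _ _; exact: hP.
transitivity (\int[(@dm _ T R n x w)]_u \int[(@dm _ T R n x w')]_v (c u v)%:E).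
  apply: eq_integral => u _; apply: eq_measure_integral => A _ _; exact: hP'.
rewrite dm_integral; last 2 first.
- exact: (meas_F ((@dm _ T R n x w'))).
- by move=> u; apply: integral_ge0 => v _; rewrite lee_fin.
rewrite -sumEFin; apply: eq_bigr => i _.
rewrite dm_integral; last 2 first.
- exact: meas_c.
- by move=> v; rewrite lee_fin.
under eq_bigr do rewrite -EFinM.
rewrite sumEFin -EFinM big_distrr /=; congr EFin; apply: eq_bigr => j _; ring.
Qed.

Lemma conv_of_D (Q1 Q2 Q : {finite_measure set T -> \bar R}) (t : R) :
  (0 <= t <= 1)%R ->
  (forall A, measurable A -> Q A = t%:E * Q1 A + (1 - t)%:E * Q2 A) ->
  (0 <= bb Q1 Q1 + bb Q2 Q2 - bb Q1 Q2 - bb Q2 Q1)%R ->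
  Kfun c Q <= t%:E * Kfun c Q1 + (1 - t)%:E * Kfun c Q2.
Proof.
move=> ht hQ hD; rewrite (K_mix ht hQ) /Kfun !bbE -!EFinM -EFinD lee_fin.
have /andP[t0 t1] := ht.
have h : (0 <= t * (1 - t))%R by rewrite mulr_ge0 // subr_ge0.
have := mulr_ge0 h hD.
nra.
Qed.

Lemma D_of_conv (Q1 Q2 Q : {finite_measure set T -> \bar R}) :
  (forall A, measurable A -> Q A = (1/2)%:E * Q1 A + (1 - 1/2)%:E * Q2 A) ->
  Kfun c Q <= (1/2)%:E * Kfun c Q1 + (1 - 1/2)%:E * Kfun c Q2 ->
  (0 <= bb Q1 Q1 + bb Q2 Q2 - bb Q1 Q2 - bb Q2 Q1)%R.
Proof.
have ht : (0 <= (1/2 : R) <= 1)%R by apply/andP; split; lra.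
move=> hQ; rewrite (K_mix ht hQ) /Kfun !bbE -!EFinM -EFinD lee_fin.
nra.
Qed.

End kernel.
Definition posp (R : realType) (a : R) := if 0 <= a then a else 0.
Definition negp (R : realType) (a : R) := if 0 <= a then 0 else - a.

Lemma posp_ge0 (R : realType) (a : R) : 0 <= posp a.
Proof. by rewrite /posp; case: ifP => // /negbT; rewrite -ltNge => /ltW. Qed.
Lemma negp_ge0 (R : realType) (a : R) : 0 <= negp a.
Proof. by rewrite /negp; case: ifP => // /negbT; rewrite -ltNge oppr_ge0 => /ltW. Qed.
Lemma posnegE (R : realType) (a : R) : posp a - negp a = a.
Proof. by rewrite /posp /negp; case: ifP => _; rewrite ?subr0 ?sub0r ?opprK. Qed.
Lemma posnegE' (R : realType) (a : R) : `|posp a| - `|negp a| = a.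
Proof. by rewrite !ger0_norm ?posp_ge0 ?negp_ge0 ?posnegE. Qed.

Unset Implicit Arguments.
Theorem lemma3p3 (R : realType) (X : ptopologicalType) (c : X -> X -> R) :
  polish_space R X ->
  continuous (fun p : X * X => c p.1 p.2) ->
  (exists M : R, forall x y, c x y <= M) ->
  (forall x y, 0 <= c x y) ->
  (forall x y, c x y = c y x) ->
  (positive_definite c <-> K_convex_on_finite_measures c) /\
  (balanced_positive_definite c <-> K_convex_on_probabilities c).
Proof.
move=> [[D [cD dD]] [dist [hd hop _]]] hc [M hM] c0 _.
have /pcard_surjP [g hg] := cD.
have dtri x y z : dist x z <= dist x y + dist y z by case: hd.
have dxx x : dist x x = 0 by case: hd => _ h _ _; apply/h.
have hden : forall x (r : R), 0 < r -> exists m, dist x (g m) < r.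
  move=> x r r0.
  have oB : open [set y | dist x y < r].
    apply/hop => z hz; exists (r - dist x z); first by rewrite subr_gt0.
    move=> y /= hy; have := dtri x z y; lra.
  have [|z [hz Dz]] := dD [set y | dist x y < r] _ oB.
    by exists x => /=; rewrite dxx.
  by have [m _ hm] := hg z Dz; exists m; rewrite hm.
split; split.
- move=> hpd Q1 Q2 Q t ht hQ.
  apply: (conv_of_D hd hop hden hc hM c0) => //.
  apply: (D_ge0 hd hop hden hc hM c0 (bal := false)) => //.
  move=> n x a _; apply: (pd_gen (bal := false)) => // n' x' hx' a' _; exact: hpd.
- move=> hconv n x xinj a.
  pose w1 i := posp (a i); pose w2 i := negp (a i).
  have w10 i : 0 <= w1 i by exact: posp_ge0.
  have w20 i : 0 <= w2 i by exact: negp_ge0.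
  have ht : (0 <= (1/2 : R) <= 1) by apply/andP; split; lra.
  have hmix := dm_mix (T := borel X) x w10 w20 ht.
  have := D_of_conv hd hop hden hc hM c0 (Q1 := @dm _ (borel X) R n x w1)
    (Q2 := @dm _ (borel X) R n x w2)
    (Q := @dm _ (borel X) R n x (fun i => 1/2 * w1 i + (1 - 1/2) * w2 i)) (fun A _ => hmix A).
  move=> /(_ (hconv _ _ _ _ ht (fun A _ => hmix A))).
  rewrite (bb_dm hd hop hden hc hM c0 (x := x) (w := w1) (w' := w1)) //.
  rewrite (bb_dm hd hop hden hc hM c0 (x := x) (w := w2) (w' := w2)) //.
  rewrite (bb_dm hd hop hden hc hM c0 (x := x) (w := w1) (w' := w2)) //.
  rewrite (bb_dm hd hop hden hc hM c0 (x := x) (w := w2) (w' := w1)) //.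
  rewrite -quad_expand.
  by under eq_bigr do under eq_bigr do rewrite !posnegE'.
- move=> hpd Q1 Q2 Q t ht hQ.
  apply: (conv_of_D hd hop hden hc hM c0) => //.
  apply: (D_ge0 hd hop hden hc hM c0 (bal := true)) => //.
    move=> n x a ha; apply: (pd_gen (bal := true)) => // n' x' hx' a' ha'.
    exact: hpd _ _ hx' a' (ha' isT).
  move=> _; transitivity (fine (1%E : \bar R)).
    by congr fine; exact: probability_setT.
  by congr fine; symmetry; exact: probability_setT.
- move=> hconv n x xinj a ha.
  pose s := \sum_i posp (a i).
  have s0 : 0 <= s by apply: sumr_ge0 => i _; exact: posp_ge0.
  have sneg : \sum_i negp (a i) = s.
    have e i : negp (a i) = posp (a i) - a i by have := posnegE (a i); lra.
    by rewrite (eq_bigr _ (fun i _ => e i)) sumrB ha subr0.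
  have [sz|sp] := eqVneq s 0.
    have h1 i : posp (a i) = 0.
      by apply: (psumr_eq0P _ sz) => // j _; exact: posp_ge0.
    have sz' : \sum_i negp (a i) = 0 by rewrite sneg.
    have h2 i : negp (a i) = 0.
      by apply: (psumr_eq0P _ sz') => // j _; exact: negp_ge0.
    rewrite big1 // => i _; rewrite big1 // => j _.
    by rewrite -(posnegE (a i)) h1 h2 subr0 mulr0 mul0r.
  have spos : 0 < s by rewrite lt_def sp s0.
  pose w1 i := posp (a i) / s; pose w2 i := negp (a i) / s.
  have w10 i : 0 <= w1 i by rewrite /w1 divr_ge0 // posp_ge0.
  have w20 i : 0 <= w2 i by rewrite /w2 divr_ge0 // negp_ge0.
  have hs1 : @dm _ (borel X) R n x w1 setT = 1%E.
    rewrite dm_setT; congr EFin.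
    by rewrite (eq_bigr _ (fun i _ => ger0_norm (w10 i))) /w1 -big_distrl /= -/s divff.
  have hs2 : @dm _ (borel X) R n x w2 setT = 1%E.
    rewrite dm_setT; congr EFin.
    by rewrite (eq_bigr _ (fun i _ => ger0_norm (w20 i))) /w2 -big_distrl /= sneg divff.
  have ht : (0 <= (1/2 : R) <= 1) by apply/andP; split; lra.
  have hmix := dm_mix (T := borel X) x w10 w20 ht.
  have hs3 : @dm _ (borel X) R n x (fun i => 1/2 * w1 i + (1 - 1/2) * w2 i) setT = 1%E.
    by rewrite hmix hs1 hs2 !mule1 -EFinD; congr EFin; lra.
  have := D_of_conv hd hop hden hc hM c0 (Q1 := mkprob hs1) (Q2 := mkprob hs2)
    (Q := mkprob hs3) (fun A _ => hmix A).
  move=> /(_ (hconv (mkprob hs1) (mkprob hs2) (mkprob hs3) _ ht (fun A _ => hmix A))).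
  rewrite (bb_dm hd hop hden hc hM c0 (x := x) (w := w1) (w' := w1)) //.
  rewrite (bb_dm hd hop hden hc hM c0 (x := x) (w := w2) (w' := w2)) //.
  rewrite (bb_dm hd hop hden hc hM c0 (x := x) (w := w1) (w' := w2)) //.
  rewrite (bb_dm hd hop hden hc hM c0 (x := x) (w := w2) (w' := w1)) //.
  rewrite -quad_expand.
  have e i : `|w1 i| - `|w2 i| = a i / s.
    by rewrite !ger0_norm // /w1 /w2 -mulrBl posnegE.
  under eq_bigr do under eq_bigr do rewrite !e.
  have -> : \sum_i \sum_j c (x i) (x j) * (a i / s) * (a j / s) =
            (s ^-2) * \sum_i \sum_j c (x i) (x j) * a i * a j.
    rewrite big_distrr; apply: eq_bigr => i _; rewrite big_distrr; apply: eq_bigr => j _.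
    rewrite /GRing.exp /=; field.
    by rewrite sp.
  by rewrite pmulr_rge0 // invr_gt0 exprn_gt0.
Qed.
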